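(* Let $G$ be a totally disconnected, locally compact group, $g\in G$ and $U$ a compact open subgroup of $G$ such that the indices $|U:U\cap g^{-1}Ug|$ and $|U:U\cap gUg^{-1}|$ are coprime. Then $U$ is tidy for $g$ and $s(g)=|U:U\cap g^{-1}Ug|$.
   Context: The scale function of a totally disconnected, locally compact group $G$ is $s(g)=\min\{|U:U\cap g^{-1}Ug| : U \text{ a compact open subgroup of } G\}$. A compact open subgroup $U$ is tidy for $g$ if this minimum is attained at $U$. *)

(* Defs.v *)
From HB Require Import structures.
From mathcomp Require Import all_boot all_order monoid.
From mathcomp Require Import finmap all_classical all_reals topology.
Set Implicit Arguments. Unset Strict Implicit. Unset Printing Implicit Defensive.

Local Open Scope classical_set_scope.
Local Open Scope group_scope.

HB.mixin Record isTopologicalGroup G of Group G & Topological G := {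
  mul_continuous : continuous (fun p : G * G => p.1 * p.2);
  inv_continuous : continuous (fun x : G => x^-1)
}.

#[short(type="topGroupType")]
HB.structure Definition TopologicalGroup :=
  {G of Group G & Topological G & isTopologicalGroup G}.

Section TDLC.
Variable G : topGroupType.

Definition tdlc : Prop :=
  [/\ hausdorff_space G, locally_compact [set: G] & totally_disconnected [set: G]].

Definition is_subgroup (U : set G) : Prop :=
  [/\ U 1, (forall x y, U x -> U y -> U (x * y)) & (forall x, U x -> U x^-1)].

Definition compact_open_subgroup (U : set G) : Prop :=
  [/\ is_subgroup U, compact U & open U].

Definition conjset (U : set G) (g : G) : set G := [set g^-1 * u * g | u in U].

Definition lcoset (x : G) (V : set G) : set G := [set x * v | v in V].

(* index |U : V| = number of cosets x V with x in U (0 if infinitely many;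
   it is always finite when V is an open subgroup of a compact group U). *)
Definition subgroup_index (U V : set G) : nat :=
  #|` fset_set [set lcoset x V | x in U] |.

Definition displacement (g : G) (U : set G) : nat := subgroup_index U (setI U (conjset U g)).

(* scale function: the minimum of |U : U ∩ g^-1 U g| over compact open
   subgroups U (0 by convention if there is no compact open subgroup). *)
Definition scale_pred (g : G) (n : nat) : bool :=
  `[< exists U, compact_open_subgroup U /\ n = displacement g U >].

Definition scale (g : G) : nat :=
  match pselect (exists n, scale_pred g n) with
  | left h => ex_minn h
  | right _ => 0%N
  end.

Definition tidy (g : G) (U : set G) : Prop :=
  compact_open_subgroup U /\ displacement g U = scale g.

End TDLC.

(* Main.v *)
Require Import Defs.
From HB Require Import structures.
From mathcomp Require Import all_boot all_order monoid.
From mathcomp Require Import finmap all_classical all_reals topology.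
From mathcomp Require Import ring.
Set Implicit Arguments. Unset Strict Implicit. Unset Printing Implicit Defensive.
Local Open Scope classical_set_scope.
Local Open Scope group_scope.

Lemma card_fsetM (K K' : choiceType) (A : {fset K}) (E : {fset K'}) :
  (#|` (A `*` E)%fset| = #|` A| * #|` E|)%N.
Proof.
rewrite /fsetM.
rewrite (perm_size (enum_imfset2 _ _)); last first.
  by move=> [x y] [x' y'] /= _ _ [-> ->].
by rewrite size_allpairs.
Qed.

Section Alg.
Variable G : topGroupType.
Implicit Types (A B C X Y : set G) (x y z : G).

Lemma lcoset_mem x B : is_subgroup B -> lcoset x B x.
Proof. by case=> B1 _ _; exists 1 => //; rewrite mulg1. Qed.

Lemma lcoset_eq x y B : is_subgroup B -> lcoset x B y -> lcoset x B = lcoset y B.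
Proof.
case=> B1 BM BV [b Bb <-]; apply/seteqP; split => z [c Bc <-].
  by exists (b^-1 * c); [apply: BM => //; apply: BV|rewrite mulgA mulgK].
by exists (b * c); [apply: BM|rewrite mulgA].
Qed.

Lemma lcoset_sub x A B : is_subgroup A -> B `<=` A -> A x -> lcoset x B `<=` A.
Proof. by case=> _ AM _ BA Ax _ [b Bb <-]; apply: AM => //; apply: BA. Qed.

Lemma lcosetM x y C : lcoset x (lcoset y C) = lcoset (x * y) C.
Proof.
apply/seteqP; split => z.
  by move=> [_ [c Cc <-] <-]; exists c => //; rewrite mulgA.
by move=> [c Cc <-]; exists (y * c); [exists c|rewrite mulgA].
Qed.

Lemma lcoset_inj x Y Y' : lcoset x Y = lcoset x Y' -> Y = Y'.
Proof.
move=> e; apply/seteqP; split => z Yz.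
  have : lcoset x Y' (x * z) by rewrite -e; exists z.
  by move=> [z' Yz' /mulgI <-].
have : lcoset x Y (x * z) by rewrite e; exists z.
by move=> [z' Yz' /mulgI <-].
Qed.

Arguments lcoset_eq {x y B}.
Arguments lcoset_sub {x A B}.

Definition rep (X : set G) := xget 1 X.

Lemma rep_coset x B : is_subgroup B -> lcoset x B (rep (lcoset x B)).
Proof. by move=> sB; apply: xgetI; apply: lcoset_mem. Qed.

Arguments rep_coset x {B}.

Lemma index_mul A B C : is_subgroup A -> is_subgroup B -> is_subgroup C ->
  B `<=` A -> C `<=` B -> finite_set [set lcoset x C | x in A] ->
  subgroup_index A C = (subgroup_index A B * subgroup_index B C)%N.
Proof.
move=> sA sB sC BA CB finAC.
have CA : C `<=` A by move=> ? /CB /BA.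
have finBC : finite_set [set lcoset x C | x in B].
  by apply: sub_finite_set finAC => _ [x Bx <-]; exists x => //; apply: BA.
have eqAB : [set lcoset x B | x in A] =
    (fun Z => lcoset (rep Z) B) @` [set lcoset x C | x in A].
  apply/seteqP; split => W.
    move=> [x Ax <-]; exists (lcoset x C); first by exists x.
    apply: esym; apply: lcoset_eq => //.
    by case: (rep_coset x sC) => c Cc <-; exists c => //; apply: CB.
  move=> [Z [x Ax <-] <-]; exists (rep (lcoset x C)) => //.
  by apply: (lcoset_sub sA CA Ax); apply: rep_coset.
have finAB : finite_set [set lcoset x B | x in A].
  by rewrite eqAB; apply: finite_image.
pose phi (p : set G * set G) := lcoset (rep p.1) p.2.
have key : forall X Y, [set lcoset x B | x in A] X -> [set lcoset x C | x in B] Y ->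
    A (rep X) /\ (forall y, Y y -> X (rep X * y)).
  move=> _ _ [x Ax <-] [y By <-]; split.
    by apply: (lcoset_sub sA BA Ax); apply: rep_coset.
  move=> _ [c Cc <-]; case: (rep_coset x sB) => b Bb <-.
  have [_ BM _] := sB.
  exists (b * (y * c)); last by rewrite !mulgA.
  by apply: (BM) => //; apply: (BM) => //; apply: CB.
have eqAC : [set lcoset x C | x in A] =
    phi @` ([set lcoset x B | x in A] `*` [set lcoset x C | x in B]).
  apply/seteqP; split => W.
    move=> [x Ax <-].
    have [b Bb eb] := rep_coset x sB.
    exists (lcoset x B, lcoset b^-1 C).
      by split; [exists x|exists b^-1 => //; case: sB => _ _; apply].
    by rewrite /phi /= lcosetM -eb mulgK.
  move=> [[X Y] /= [XAB YBC] <-]; rewrite /phi /=.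
  move: (YBC) => [y By eY]; rewrite -eY lcosetM.
  exists (rep X * y) => //.
  have [Ar H] := key _ _ XAB YBC.
  by case: sA => _ AM _; apply: AM => //; apply: BA.
have inj : {in fset_set ([set lcoset x B | x in A] `*` [set lcoset x C | x in B]) &,
    injective phi}.
  move=> [X Y] [X' Y']; rewrite !in_fset_set ?inE; try by apply: finite_setX.
  move=> /= [XA YB] [XA' YB']; rewrite /phi /=.
  have [_ H] := key _ _ XA YB; have [_ H'] := key _ _ XA' YB'.
  move: (YB) => [y _ eY].
  have Yy : Y y by rewrite -eY; apply: lcoset_mem.
  move=> e.
  have eX : X = X'.
    have X'r : X' (rep X * y).
      have : lcoset (rep X') Y' (rep X * y) by rewrite -e; exists y.
      by move=> [y' Yy' <-]; apply: H'.
    move: (XA) (XA') X'r (H _ Yy) => [x1 _ e1] [x2 _ e2].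
    rewrite -e1 -e2 => h1 h2.
    exact: (etrans (lcoset_eq sB h2) (esym (lcoset_eq sB h1))).
  by move: e; rewrite -eX => /lcoset_inj ->; rewrite eX.
rewrite /subgroup_index eqAC fset_set_image; last by apply: finite_setX.
rewrite card_in_imfset //= fset_setX //.
by rewrite -card_fsetM.
Qed.

Arguments index_mul {A B C}.

Lemma index_gt0 A B : is_subgroup A -> finite_set [set lcoset x B | x in A] ->
  (0 < subgroup_index A B)%N.
Proof.
case=> A1 _ _ fin; rewrite /subgroup_index cardfs_gt0; apply/fset0Pn.
by exists (lcoset 1 B); rewrite in_fset_set ?inE //; exists 1.
Qed.

Arguments index_gt0 {A B}.

Lemma subgroupI A B : is_subgroup A -> is_subgroup B -> is_subgroup (A `&` B).
Proof.
case=> A1 AM AV [B1 BM BV]; split => //.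
- by move=> x y [? ?] [? ?]; split; [apply: AM|apply: BM].
- by move=> x [? ?]; split; [apply: AV|apply: BV].
Qed.

Arguments subgroupI {A B}.

Lemma conjsetE X g z : conjset X g z <-> X (g * z * g^-1).
Proof.
split; first by move=> [u Xu <-]; rewrite !mulgA mulgV mul1g mulgK.
by move=> Xz; exists (g * z * g^-1) => //; rewrite !mulgA mulVg mul1g mulgVK.
Qed.

Lemma conjset_ext X Y g h : (forall z, X (g * z * g^-1) <-> Y (h * z * h^-1)) ->
  conjset X g = conjset Y h.
Proof.
by move=> e; apply/seteqP; split => z /conjsetE H; apply/conjsetE; apply/e.
Qed.

Lemma conjsetI X Y g : conjset (X `&` Y) g = conjset X g `&` conjset Y g.
Proof.
apply/seteqP; split => z.
  by move=> /conjsetE [? ?]; split; apply/conjsetE.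
by move=> [/conjsetE ? /conjsetE ?]; apply/conjsetE.
Qed.

Lemma conjsetK X h k : conjset (conjset X h) k = conjset X (h * k).
Proof.
apply/seteqP; split => z.
  by move=> /conjsetE /conjsetE H; apply/conjsetE; rewrite invgM !mulgA; rewrite !mulgA in H.
by move=> /conjsetE H; apply/conjsetE; apply/conjsetE; rewrite invgM !mulgA in H; rewrite !mulgA.
Qed.

Lemma conjset1 X : conjset X 1 = X.
Proof.
apply/seteqP; split => z; first by move=> /conjsetE; rewrite invg1 mulg1 mul1g.
by move=> Xz; apply/conjsetE; rewrite invg1 mulg1 mul1g.
Qed.

Lemma conjset_inj X Y g : conjset X g = conjset Y g -> X = Y.
Proof.
move=> e; rewrite -(conjset1 X) -(conjset1 Y) -(mulgV g) -!conjsetK.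
by rewrite e.
Qed.

Lemma conjset_lcoset x Y g :
  conjset (lcoset x Y) g = lcoset (g^-1 * x * g) (conjset Y g).
Proof.
apply/seteqP; split => z.
  move=> [_ [y Yy <-] <-]; exists (g^-1 * y * g); first by exists y.
  by rewrite !mulgA mulgK.
move=> [_ [y Yy <-] <-]; exists (x * y); first by exists y.
by rewrite !mulgA mulgK.
Qed.

Lemma subgroup_conj X g : is_subgroup X -> is_subgroup (conjset X g).
Proof.
case=> X1 XM XV; split.
- by apply/conjsetE; rewrite mulg1 mulgV.
- move=> x y /conjsetE Hx /conjsetE Hy; apply/conjsetE.
  have := XM _ _ Hx Hy; by rewrite !mulgA mulgVK.
- move=> x /conjsetE Hx; apply/conjsetE.
  have := XV _ Hx; by rewrite !invgM invgK !mulgA.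
Qed.

Lemma index_conj X Y g : finite_set [set lcoset x Y | x in X] ->
  subgroup_index (conjset X g) (conjset Y g) = subgroup_index X Y.
Proof.
move=> fin.
have e : [set lcoset x (conjset Y g) | x in conjset X g] =
    (fun Z => conjset Z g) @` [set lcoset x Y | x in X].
  apply/seteqP; split => W.
    move=> [_ [x Xx <-] <-]; exists (lcoset x Y); first by exists x.
    by rewrite conjset_lcoset.
  move=> [_ [x Xx <-] <-]; exists (g^-1 * x * g); first by exists x.
  by rewrite conjset_lcoset.
rewrite /subgroup_index e fset_set_image // card_in_imfset //.
by move=> ? ? _ _; apply: conjset_inj.
Qed.

Definition iidx X Y := subgroup_index X (X `&` Y).

Lemma pair_lemma X Y D : is_subgroup X -> is_subgroup Y -> is_subgroup D ->
  D `<=` X `&` Y -> finite_set [set lcoset x D | x in X] ->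
  finite_set [set lcoset x D | x in Y] ->
  (iidx X Y * subgroup_index Y D = iidx Y X * subgroup_index X D)%N.
Proof.
move=> sX sY sD DXY fX fY.
have h1 := index_mul sX (subgroupI sX sY) sD (fun _ h => proj1 h) DXY fX.
have DYX : D `<=` Y `&` X by rewrite setIC.
have h2 := index_mul sY (subgroupI sY sX) sD (fun _ h => proj1 h) DYX fY.
rewrite h1 h2 /iidx [Y `&` X]setIC; ring.
Qed.

Arguments pair_lemma {X Y D}.

Lemma cocycle X Y Z : is_subgroup X -> is_subgroup Y -> is_subgroup Z ->
  finite_set [set lcoset x (X `&` Y `&` Z) | x in X] ->
  finite_set [set lcoset x (X `&` Y `&` Z) | x in Y] ->
  finite_set [set lcoset x (X `&` Y `&` Z) | x in Z] ->
  (iidx X Y * iidx Y Z * iidx Z X = iidx Y X * iidx Z Y * iidx X Z)%N.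
Proof.
move=> sX sY sZ fX fY fZ.
have sD := subgroupI (subgroupI sX sY) sZ.
have e1 := pair_lemma sX sY sD (fun _ '(conj (conj a b) c) => conj a b) fX fY.
have e2 := pair_lemma sY sZ sD (fun _ '(conj (conj a b) c) => conj b c) fY fZ.
have e3 := pair_lemma sZ sX sD (fun _ '(conj (conj a b) c) => conj c a) fZ fX.
have px := index_gt0 sX fX; have py := index_gt0 sY fY; have pz := index_gt0 sZ fZ.
set x := subgroup_index X _ in e1 e3 px.
set y := subgroup_index Y _ in e1 e2 py.
set z := subgroup_index Z _ in e2 e3 pz.
apply/eqP; rewrite -(@eqn_pmul2r (x * y * z)); last by rewrite !muln_gt0 px py pz.
apply/eqP.
transitivity ((iidx X Y * y) * (iidx Y Z * z) * (iidx Z X * x))%N; first ring.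
rewrite e1 e2 e3; ring.
Qed.

Lemma mul2_continuous (a b : G) : continuous (fun x : G => a * x * b).
Proof.
move=> x.
have h1 : (fun y : G => a * y) @ x --> a * x.
  apply: (@continuous2_cvg _ _ _ _ _ _ (fun=> a) id (fun u v => u * v)).
  - exact: (@mul_continuous G (a, x)).
  - exact: cvg_cst.
  - exact: cvg_id.
apply: (@continuous2_cvg _ _ _ _ _ _ (fun y => a * y) (fun=> b) (fun u v => u * v)).
- exact: (@mul_continuous G (a * x, b)).
- exact: h1.
- exact: cvg_cst.
Qed.

Lemma open_pre (a b : G) X : open X -> open ((fun x => a * x * b) @^-1` X).
Proof. by move=> oX; apply: open_comp => // y _; apply: mul2_continuous. Qed.

Lemma lcoset_open x B : open B -> open (lcoset x B).
Proof.
move=> oB.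
have -> : lcoset x B = (fun y => x^-1 * y * 1) @^-1` B.
  apply/seteqP; split => y.
    by move=> [b Bb <-]; rewrite /= mulg1 mulKg.
  by move=> /= By; exists (x^-1 * y * 1) => //; rewrite mulg1 mulVKg.
exact: open_pre.
Qed.

Lemma conj_open X g : open X -> open (conjset X g).
Proof.
move=> oX.
have -> : conjset X g = (fun z => g * z * g^-1) @^-1` X.
  by apply/seteqP; split => z /conjsetE.
exact: open_pre.
Qed.

Lemma conj_compact X g : compact X -> compact (conjset X g).
Proof.
move=> cX; apply: continuous_compact => //.
by apply: continuous_subspaceT; apply: mul2_continuous.
Qed.

Definition pG : Type := G.
HB.instance Definition _ := Topological.on pG.
HB.instance Definition _ := isPointed.Build pG (1 : G).
Lemma compact_cover_G {A : set G} : compact A -> cover_compact A.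
Proof.
move=> cA.
have : @compact pG A by [].
by rewrite compact_cover.
Qed.

Lemma finite_index A B : compact A -> is_subgroup B -> open B ->
  finite_set [set lcoset x B | x in A].
Proof.
move=> cA sB oB.
have := @compact_cover_G _ cA G A (fun x => lcoset x B).
case.
- by move=> i _; apply: lcoset_open.
- by move=> x Ax; exists x => //; apply: lcoset_mem.
move=> D' _ cov.
apply: (@sub_finite_set _ _ ((fun x => lcoset x B) @` [set` D'])).
  move=> _ [x Ax <-]; have [y D'y xy] := cov x Ax.
  by exists y => //; apply: lcoset_eq.
by apply: finite_image; apply: finite_fset.
Qed.

Lemma cop_conj X g : compact_open_subgroup X -> compact_open_subgroup (conjset X g).
Proof.
case=> sX cX oX; split; [exact: subgroup_conj|exact: conj_compact|exact: conj_open].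
Qed.

Lemma cop_fin X Y Z : compact_open_subgroup X -> compact_open_subgroup Y ->
  compact_open_subgroup Z -> finite_set [set lcoset x (X `&` Y `&` Z) | x in X].
Proof.
case=> sX cX oX [sY cY oY] [sZ cZ oZ]; apply: finite_index => //.
- exact: subgroupI (subgroupI sX sY) sZ.
- by apply: openI => //; apply: openI.
Qed.

Lemma cop_fin2 X Y : compact_open_subgroup X -> compact_open_subgroup Y ->
  finite_set [set lcoset x (X `&` Y) | x in X].
Proof.
case=> sX cX oX [sY cY oY]; apply: finite_index => //.
- exact: subgroupI sX sY.
- by apply: openI.
Qed.

Lemma iidx_conj X Y g : compact_open_subgroup X -> compact_open_subgroup Y ->
  iidx (conjset X g) (conjset Y g) = iidx X Y.
Proof.
move=> cX cY; rewrite /iidx -conjsetI; apply: index_conj; exact: cop_fin2.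
Qed.

Lemma cocycle_cop X Y Z : compact_open_subgroup X -> compact_open_subgroup Y ->
  compact_open_subgroup Z ->
  (iidx X Y * iidx Y Z * iidx Z X = iidx Y X * iidx Z Y * iidx X Z)%N.
Proof.
move=> cX cY cZ; have [sX _ _] := cX; have [sY _ _] := cY; have [sZ _ _] := cZ.
apply: cocycle => //; first exact: cop_fin.
- have -> : X `&` Y `&` Z = Y `&` X `&` Z by rewrite [X `&` Y]setIC.
  exact: cop_fin.
- have -> : X `&` Y `&` Z = Z `&` X `&` Y by rewrite setIC setIA.
  exact: cop_fin.
Qed.

End Alg.

Unset Implicit Arguments.

Theorem corollary4p12 (G : topGroupType) (g : G) (U : set G) :
  tdlc G ->
  compact_open_subgroup U ->
  coprime (subgroup_index U (setI U (conjset U g))) (subgroup_index U (setI U (conjset U g^-1))) ->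
  tidy g U /\ scale g = subgroup_index U (setI U (conjset U g)).
Proof.
move=> _ cU cop.
set a := subgroup_index U _ in cop *.
set b := subgroup_index U _ in cop.
set V := conjset U g.
have cV : compact_open_subgroup V by exact: cop_conj.
have hb : b = iidx V U.
  rewrite /b /iidx -(index_conj g); last exact: cop_fin2 (cop_conj _ cU).
  by rewrite conjsetI conjsetK mulVg conjset1.
have ha : a = iidx U V by [].
have [m sm] : exists m, scale_pred g m.
  by exists a; apply/asboolP; exists U.
have [W [cW eW] Wmin] : exists2 W, compact_open_subgroup W /\ scale g = displacement g W &
    forall n, scale_pred g n -> (scale g <= n)%N.
  rewrite /scale; case: pselect => [h|nh]; last by exfalso; apply: nh; exists m.
  case: ex_minnP => n /asboolP [W [cW ->]] hmin.
  by exists W.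
have sa : (scale g <= a)%N by apply: Wmin; apply/asboolP; exists U.
set W' := conjset W g.
have cW' : compact_open_subgroup W' by exact: cop_conj.
have c1 := cocycle_cop cU cV cW'.
have c2 := cocycle_cop cU cW cW'.
rewrite (iidx_conj g cU cW) /V /W' (iidx_conj g cW cU) -/V -/W' in c1.
set aW := iidx W W' in c2.
set bW := iidx W' W in c2.
have eaW : scale g = aW by rewrite eW.
have pWU : (0 < iidx W U)%N.
  by have [sW _ _] := cW; apply: index_gt0 sW (cop_fin2 cW cU).
have pUW' : (0 < iidx U W')%N.
  by have [sU _ _] := cU; apply: index_gt0 sU (cop_fin2 cU cW').
have key : (a * bW = b * aW)%N.
  apply/eqP; rewrite -(@eqn_pmul2r (iidx W U * iidx U W')); last by rewrite muln_gt0 pWU pUW'.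
  apply/eqP.
  transitivity (a * (iidx W U * bW * iidx U W'))%N; first ring.
  rewrite -c2.
  transitivity (aW * (a * iidx U W * iidx W' U))%N; first ring.
  rewrite ha c1 -hb; ring.
have daW : (a %| aW)%N.
  by rewrite -(Gauss_dvdr _ cop) -key dvdn_mulr.
have aW0 : (0 < aW)%N.
  by have [sW _ _] := cW; apply: index_gt0 sW (cop_fin2 cW cW').
have eq : scale g = a.
  apply/eqP; rewrite eqn_leq sa /= eaW; exact: dvdn_leq.
by split => //; split => //; rewrite eq.
Qed.
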